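(* Assume (R) and (F), let $\alpha\in(0,\infty)^T$, let $u_t(x)=\frac{1}{\alpha_t}[1-\exp(-\alpha_tx)]$ for $t\in\mathbb{T}$, fix initial wealth $w\in\mathbb{R}$, and let $Z\in L^\infty$ have the representation $Z=\sum_{t=1}^T z_t1_{(t-1<\tau\le t)}+z_{T+1}1_{(T<\tau)}$. Then: (a) the indifference price is $H(Z)=\log h_0$; (b) the optimal intertemporal allocation $(X_t)\in\mathcal{A}(w+H(Z)-Z)$ of $w+H(Z)-Z$ (which satisfies $\sum_tE[u_t(\tilde X_t)]=U(w+H(Z)-Z)=U(w)$) is given by $X_1=\frac{B_1}{\alpha_1}\big[\beta_1(w+H(Z))-\beta_1z_1 1_{(0<\tau\le1)}-\beta_1\log h_1\,1_{(1<\tau)}\big]$ and, for $t=2,\dots,T$, $X_t=\frac{B_t}{\alpha_t}\Big[\beta_1(w+H(Z))-\sum_{k=1}^t\beta_kz_k1_{(k-1<\tau\le k)}-\beta_t\log h_t\,1_{(t<\tau)}+\sum_{k=1}^{t-1}\frac{\beta_{k+1}\beta_k}{\alpha_k}\log h_k\,1_{(k<\tau)}\Big]$.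
   Context: Let $T\ge1$, $\mathbb{T}=\{1,\dots,T\}$, and $(\Omega,\mathcal{F},P)$ a probability space carrying a random variable $\tau$ with $\tau(\omega)>0$ for all $\omega$ and $P(\tau=s)=0$ for all $s\in[0,\infty)$. Let $D_t=1_{(\tau\le t)}$ for $t=0,\dots,T$ and $\mathcal{H}_t=\sigma(D_s:s=0,\dots,t)$. Condition (F): the filtration is $\mathcal{F}_t=\mathcal{H}_t$; $L^\infty=L^\infty(\Omega,\mathcal{F}_T,P)$. Condition (R): the interest rates $r_t\ge0$ are deterministic; $B_0=1$, $B_t=\prod_{k=1}^t(1+r_k)$, $\tilde X_t=X_t/B_t$. For $W\in L^\infty$, $\mathcal{A}(W)$ is the set of adapted processes $(Y_t)_{t\in\mathbb{T}}$ with $Y_t\in L^\infty$ and $\sum_{t}\tilde Y_t=W$ a.s.; $U(W)=\sup\{\sum_tE[u_t(\tilde Y_t)]:(Y_t)\in\mathcal{A}(W)\}$; the indifference price $H(Z)$ is the real number with $U(w+H(Z)-Z)=U(w)$. Let $q_t=P(\tau\le t+1\mid\tau>t)$, $p_t=1-q_t$ ($t=0,\dots,T-1$). Define $\beta_t$ by $1/\beta_t=\sum_{k=t}^T1/\alpha_k$, and $h_T=e^{z_{T+1}}$, $h_{t-1}=\big[e^{\beta_tz_t}q_{t-1}+h_t^{\beta_t}p_{t-1}\big]^{1/\beta_t}$ for $t=1,\dots,T$. *)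

(* Defs.v *)
From Stdlib Require Import Reals Lra List.
Import ListNotations.
Open Scope R_scope.

Record ProbSpace := {
  Omega : Type;
  Fsig : (Omega -> Prop) -> Prop;
  Prob : (Omega -> Prop) -> R;
  Fsig_full : Fsig (fun _ => True);
  Fsig_compl : forall A, Fsig A -> Fsig (fun w => ~ A w);
  Fsig_union : forall A : nat -> Omega -> Prop,
      (forall n, Fsig (A n)) -> Fsig (fun w => exists n, A n w);
  Prob_nonneg : forall A, Fsig A -> 0 <= Prob A;
  Prob_full : Prob (fun _ => True) = 1;
  Prob_sigma_additive : forall A : nat -> Omega -> Prop,
      (forall n, Fsig (A n)) ->
      (forall m n w, m <> n -> A m w -> A n w -> False) ->
      infinite_sum (fun n => Prob (A n)) (Prob (fun w => exists n, A n w))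
}.

Definition almost_surely (PS : ProbSpace) (Q : Omega PS -> Prop) : Prop :=
  exists N, Fsig PS N /\ Prob PS N = 0 /\ forall w, ~ N w -> Q w.

(* finite sum  sum_{k=m}^{n} f k  (empty if n < m) *)
Definition sumR (m n : nat) (f : nat -> R) : R :=
  fold_right (fun k acc => f k + acc) 0 (seq m (S n - m)).

Definition Dind {O : Type} (tau : O -> R) (s : nat) (w : O) : R :=
  if Rle_dec (tau w) (INR s) then 1 else 0.

(* (D_0(w), ..., D_t(w)) as booleans: an H_t-measurable random variable is
   exactly a function of this history (Doob-Dynkin, finitely many indicators) *)
Definition hist {O : Type} (tau : O -> R) (t : nat) (w : O) : list bool :=
  map (fun s => if Rle_dec (tau w) (INR s) then true else false) (seq 0 (S t)).

Fixpoint Bacc (r : nat -> R) (t : nat) : R :=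
  match t with O => 1 | S k => Bacc r k * (1 + r (S k)) end.

Definition uexp (alpha : nat -> R) (t : nat) (x : R) : R :=
  / alpha t * (1 - exp (- alpha t * x)).

Definition bucket {O : Type} (tau : O -> R) (T k : nat) (w : O) : Prop :=
  if Nat.leb k T then INR (k - 1) < tau w <= INR k else INR T < tau w.

(* history of D_0..D_t on bucket k *)
Definition bucket_hist (k t : nat) : list bool :=
  map (fun s => Nat.leb k s) (seq 0 (S t)).

(* Expectation of f(Y) for an H_t-measurable Y = g(hist t), i.e. the integral
   of a simple function: sum over the (T+1) atoms of H_T. *)
Definition Expect_hist (PS : ProbSpace) (tau : Omega PS -> R) (T t : nat)
    (f : list bool -> R) : R :=
  sumR 1 (S T) (fun k => Prob PS (bucket tau T k) * f (bucket_hist k t)).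

(* sum_t E[u_t(Y_t / B_t)] for the adapted process Y_t = g t (hist t) *)
Definition value (PS : ProbSpace) (tau : Omega PS -> R) (T : nat)
    (r alpha : nat -> R) (g : nat -> list bool -> R) : R :=
  sumR 1 T (fun t => Expect_hist PS tau T t
                        (fun hb => uexp alpha t (g t hb / Bacc r t))).

(* The set {sum_t E[u_t(Y~_t)] : (Y_t) in A(W)}; U(W) is its supremum. *)
Definition attainable (PS : ProbSpace) (tau : Omega PS -> R) (T : nat)
    (r alpha : nat -> R) (W : Omega PS -> R) : R -> Prop :=
  fun v => exists g : nat -> list bool -> R,
    almost_surely PS (fun w => sumR 1 T (fun t => g t (hist tau t w) / Bacc r t) = W w)
    /\ v = value PS tau T r alpha g.

Definition U_is (PS : ProbSpace) (tau : Omega PS -> R) (T : nat)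
    (r alpha : nat -> R) (W : Omega PS -> R) (u : R) : Prop :=
  is_lub (attainable PS tau T r alpha W) u.

Definition qt (PS : ProbSpace) (tau : Omega PS -> R) (t : nat) : R :=
  Prob PS (fun w => INR t < tau w <= INR (S t)) / Prob PS (fun w => INR t < tau w).
Definition pt (PS : ProbSpace) (tau : Omega PS -> R) (t : nat) : R :=
  1 - qt PS tau t.

Definition beta (T : nat) (alpha : nat -> R) (t : nat) : R :=
  / sumR t T (fun k => / alpha k).

(* hrev n = h_{T-n} *)
Fixpoint hrev (PS : ProbSpace) (tau : Omega PS -> R) (T : nat) (alpha z : nat -> R)
    (n : nat) : R :=
  match n with
  | O => exp (z (S T))
  | S m => let t := (T - m)%nat in
      Rpower (exp (beta T alpha t * z t) * qt PS tau (t - 1)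
              + Rpower (hrev PS tau T alpha z m) (beta T alpha t) * pt PS tau (t - 1))
             (/ beta T alpha t)
  end.

Definition hseq (PS : ProbSpace) (tau : Omega PS -> R) (T : nat) (alpha z : nat -> R)
    (t : nat) : R := hrev PS tau T alpha z (T - t).

Definition Zclaim {O : Type} (tau : O -> R) (T : nat) (z : nat -> R) (w : O) : R :=
  sumR 1 T (fun t => z t * (Dind tau t w - Dind tau (t - 1) w))
  + z (S T) * (1 - Dind tau T w).

Definition Xopt (PS : ProbSpace) (tau : Omega PS -> R) (T : nat)
    (r alpha z : nat -> R) (w0 H : R) (t : nat) (w : Omega PS) : R :=
  let b := beta T alpha in
  let h := hseq PS tau T alpha z in
  Bacc r t / alpha t *
   ( b 1%nat * (w0 + H)
     - sumR 1 t (fun k => b k * z k * (Dind tau k w - Dind tau (k - 1) w))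
     - b t * ln (h t) * (1 - Dind tau t w)
     + sumR 1 (t - 1) (fun k => b (S k) * b k / alpha k * ln (h k) * (1 - Dind tau k w)) ).

(* Main.v *)
Require Import Defs.
From Stdlib Require Import Reals List Lra Lia Classical FunctionalExtensionality PropExtensionality.
Open Scope R_scope.

Definition Lsum (l : list nat) (f : nat -> R) : R := fold_right (fun k acc => f k + acc) 0 l.

Lemma Lsum_app l1 l2 f : Lsum (l1 ++ l2) f = Lsum l1 f + Lsum l2 f.
Proof. induction l1; simpl; [lra| rewrite IHl1; lra]. Qed.
Lemma Lsum_plus l f g : Lsum l (fun k => f k + g k) = Lsum l f + Lsum l g.
Proof. induction l; simpl; [lra| rewrite IHl; lra]. Qed.
Lemma Lsum_scal l c f : Lsum l (fun k => c * f k) = c * Lsum l f.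
Proof. induction l; simpl; [lra| rewrite IHl; lra]. Qed.
Lemma Lsum_ext l f g : (forall k, In k l -> f k = g k) -> Lsum l f = Lsum l g.
Proof. induction l; simpl; intros H; auto. rewrite H, IHl; auto. Qed.
Lemma Lsum_le l f g : (forall k, In k l -> f k <= g k) -> Lsum l f <= Lsum l g.
Proof. induction l; simpl; intros H; [lra|]. specialize (IHl (fun k h => H k (or_intror h))). specialize (H a (or_introl eq_refl)). lra. Qed.
Lemma Lsum_exch l1 l2 F : Lsum l1 (fun t => Lsum l2 (fun k => F t k)) = Lsum l2 (fun k => Lsum l1 (fun t => F t k)).
Proof. induction l1; simpl. { induction l2; simpl; lra. } rewrite IHl1, <- Lsum_plus. reflexivity. Qed.

Lemma sumR_L m n f : sumR m n f = Lsum (seq m (S n - m)) f.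
Proof. reflexivity. Qed.

Lemma sumR_nil m n f : (n < m)%nat -> sumR m n f = 0.
Proof. intros; unfold sumR. replace (S n - m)%nat with 0%nat by lia. reflexivity. Qed.
Lemma sumR_cons m n f : (m <= n)%nat -> sumR m n f = f m + sumR (S m) n f.
Proof. intros; unfold sumR. replace (S n - m)%nat with (S (S n - S m)) by lia. reflexivity. Qed.
Lemma sumR_snoc m n f : (m <= S n)%nat -> sumR m (S n) f = sumR m n f + f (S n).
Proof. intros; rewrite !sumR_L. replace (S (S n) - m)%nat with (S (S n - m)) by lia.
  rewrite seq_S, Lsum_app. cbn [Lsum fold_right]. replace (m + (S n - m))%nat with (S n) by lia. lra. Qed.
Lemma sumR_ext m n f g : (forall k, (m <= k <= n)%nat -> f k = g k) -> sumR m n f = sumR m n g.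
Proof. intros H; rewrite !sumR_L; apply Lsum_ext. intros k Hk. apply in_seq in Hk. apply H; lia. Qed.
Lemma sumR_le m n f g : (forall k, (m <= k <= n)%nat -> f k <= g k) -> sumR m n f <= sumR m n g.
Proof. intros H; rewrite !sumR_L; apply Lsum_le. intros k Hk. apply in_seq in Hk. apply H; lia. Qed.
Lemma sumR_plus m n f g : sumR m n (fun k => f k + g k) = sumR m n f + sumR m n g.
Proof. apply Lsum_plus. Qed.
Lemma sumR_scal m n c f : sumR m n (fun k => c * f k) = c * sumR m n f.
Proof. apply Lsum_scal. Qed.
Lemma sumR_exch a b c d F : sumR a b (fun t => sumR c d (fun k => F t k)) = sumR c d (fun k => sumR a b (fun t => F t k)).
Proof. apply Lsum_exch. Qed.
Lemma sumR_split m p n f : (m <= S p)%nat -> (p <= n)%nat -> sumR m n f = sumR m p f + sumR (S p) n f.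
Proof. intros H1 H2. induction n as [|n IH].
  - replace p with 0%nat by lia. rewrite (sumR_nil 1 0) by lia. lra.
  - destruct (Nat.eq_dec p (S n)). + subst. rewrite (sumR_nil (S (S n))) by lia. lra.
    + rewrite sumR_snoc by lia. rewrite IH by lia. rewrite sumR_snoc by lia. lra. Qed.
Lemma sumR_zero m n f : (forall k, (m <= k <= n)%nat -> f k = 0) -> sumR m n f = 0.
Proof. intros H. rewrite (sumR_ext _ _ _ (fun k => 0 * 0)). rewrite sumR_scal; lra. intros; rewrite H; auto; lra. Qed.
Lemma sumR_one m n f : (m <= n)%nat -> sumR m n f = f m + sumR (S m) n f.
Proof. apply sumR_cons. Qed.

Section ProbSec.
Variable PS : ProbSpace.

Lemma set_ext (A B : Omega PS -> Prop) : (forall w, A w <-> B w) -> A = B.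
Proof. intros H; apply functional_extensionality; intros w; apply propositional_extensionality; auto. Qed.

Lemma Fsig_ext A B : (forall w, A w <-> B w) -> Fsig PS A -> Fsig PS B.
Proof. intros H; rewrite (set_ext A B H); auto. Qed.
Lemma Prob_ext A B : (forall w, A w <-> B w) -> Prob PS A = Prob PS B.
Proof. intros H; rewrite (set_ext A B H); auto. Qed.

Lemma Fsig_empty : Fsig PS (fun _ => False).
Proof. apply (Fsig_ext (fun w => ~ True)). tauto. apply Fsig_compl, Fsig_full. Qed.

Lemma Prob_empty : Prob PS (fun _ => False) = 0.
Proof.
  set (p := Prob PS (fun _ => False)).
  assert (H := Prob_sigma_additive PS (fun _ _ => False) (fun _ => Fsig_empty) (fun _ _ _ _ h _ => h)).
  assert (E : (fun w : Omega PS => exists n : nat, False) = (fun _ => False)).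
  { apply set_ext. intros; split; [intros [_ []]|tauto]. }
  simpl in H. rewrite E in H. fold p in H.
  assert (Hs : forall n, sum_f_R0 (fun _ => p) n = INR (S n) * p).
  { induction n; simpl sum_f_R0. simpl; lra. rewrite IHn. rewrite (S_INR (S n)). lra. }
  destruct (Req_dec p 0) as [|Hp]; auto. exfalso.
  destruct (H (Rabs p / 2)) as [N HN]. { assert (Rabs p > 0) by (apply Rabs_pos_lt; auto). lra. }
  specialize (HN (S N) ltac:(lia)). rewrite Hs in HN. unfold Rdist in HN.
  replace (INR (S (S N)) * p - p) with (INR (S N) * p) in HN by (rewrite (S_INR (S N)); ring).
  rewrite Rabs_mult, Rabs_right in HN by (apply Rle_ge, pos_INR).
  assert (1 <= INR (S N)) by (rewrite S_INR; generalize (pos_INR N); lra).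
  assert (Rabs p > 0) by (apply Rabs_pos_lt; auto). nra.
Qed.

Lemma Fsig_union2 A B : Fsig PS A -> Fsig PS B -> Fsig PS (fun w => A w \/ B w).
Proof. intros HA HB.
  apply (Fsig_ext (fun w => exists n : nat, (match n with 0%nat => A | _ => B end) w)).
  { intros w; split. intros [[|n] h]; auto. intros [h|h]. exists 0%nat; auto. exists 1%nat; auto. }
  apply Fsig_union. intros [|n]; auto. Qed.

Lemma Fsig_inter2 A B : Fsig PS A -> Fsig PS B -> Fsig PS (fun w => A w /\ B w).
Proof. intros HA HB. apply (Fsig_ext (fun w => ~ (~ A w \/ ~ B w))).
  { intros w; split. intros h. apply NNPP; tauto. tauto. }
  apply Fsig_compl, Fsig_union2; apply Fsig_compl; auto. Qed.

Lemma Prob_add A B : Fsig PS A -> Fsig PS B -> (forall w, A w -> B w -> False) ->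
  Prob PS (fun w => A w \/ B w) = Prob PS A + Prob PS B.
Proof. intros HA HB Hd.
  set (S := fun n : nat => match n with 0%nat => A | 1%nat => B | _ => fun _ => False end).
  assert (H := Prob_sigma_additive PS S).
  rewrite (Prob_ext (fun w => exists n, S n w) (fun w => A w \/ B w)) in H.
  2:{ intros w; split. intros [[|[|n]] h]; simpl in h; tauto. intros [h|h]. exists 0%nat; auto. exists 1%nat; auto. }
  apply (uniqueness_sum (fun n => Prob PS (S n))). apply H.
  - intros [|[|n]]; simpl; auto. apply Fsig_empty.
  - intros [|[|m]] [|[|n]] w Hmn h1 h2; simpl in *; try tauto; try lia; eauto.
  - intros eps He. exists 1%nat. intros n Hn. unfold Rdist.
    assert (sum_f_R0 (fun n => Prob PS (S n)) n = Prob PS A + Prob PS B).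
    { induction n. lia. destruct (Nat.eq_dec n 0). subst. simpl. lra.
      simpl sum_f_R0. rewrite IHn by lia. destruct n. lia. simpl. rewrite Prob_empty. lra. }
    rewrite H0. rewrite Rminus_diag, Rabs_R0. lra.
Qed.

Lemma Prob_mono A B : Fsig PS A -> Fsig PS B -> (forall w, A w -> B w) -> Prob PS A <= Prob PS B.
Proof. intros HA HB Hs.
  rewrite (Prob_ext B (fun w => A w \/ (B w /\ ~ A w))).
  2:{ intros w; split. intros h. destruct (classic (A w)); auto. intros [h|[h _]]; auto. }
  rewrite Prob_add; auto. 2: apply Fsig_inter2; auto; apply Fsig_compl; auto.
  2: tauto. assert (0 <= Prob PS (fun w => B w /\ ~ A w)). apply Prob_nonneg, Fsig_inter2; auto; apply Fsig_compl; auto. lra.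
Qed.

End ProbSec.

Ltac nlia := match goal with |- ?G => change G end; solve [ Lia.lia | (repeat match goal with H : ?P |- _ => match P with context [Rlt] => clear H | context [Rle] => clear H | context [Rgt] => clear H | context [Rge] => clear H | context [@eq R] => clear H end end); Lia.lia ].

Ltac rring := unfold Rdiv; ring.

Section Main.
Variable PS : ProbSpace.
Variable tau : Omega PS -> R.
Variable T : nat.
Variables alpha z : nat -> R.
Hypothesis HT : (1 <= T)%nat.
Hypothesis Halpha : forall t, (1 <= t <= T)%nat -> 0 < alpha t.

Definition sgm t := sumR t T (fun k => / alpha k).
Definition b := beta T alpha.
Definition h := hseq PS tau T alpha z.
Definition L t := ln (h t).
Definition cc j := b (S j) * b j / alpha j * L j.
Definition G n := sumR 1 (n - 1) cc.

Lemma sumR_nonneg m n f : (forall k, (m <= k <= n)%nat -> 0 <= f k) -> 0 <= sumR m n f.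
Proof. intros H. rewrite <- (sumR_zero m n (fun _ => 0)) by auto. apply sumR_le; auto. Qed.

Lemma b_def t : b t = / sgm t.
Proof. reflexivity. Qed.
Lemma sgm_rec t : (1 <= t <= T)%nat -> sgm t = / alpha t + sgm (S t).
Proof. intros; unfold sgm; apply sumR_cons. nlia. Qed.
Lemma sgm_T1 : sgm (S T) = 0.
Proof. unfold sgm; apply sumR_nil; nlia. Qed.
Lemma sgm_nonneg t : (1 <= t)%nat -> 0 <= sgm t.
Proof. intros; unfold sgm; apply sumR_nonneg; intros; left; apply Rinv_0_lt_compat, Halpha; nlia. Qed.
Lemma sgm_pos t : (1 <= t <= T)%nat -> 0 < sgm t.
Proof. intros; rewrite sgm_rec by nlia. assert (0 < / alpha t) by (apply Rinv_0_lt_compat, Halpha; nlia).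
  generalize (sgm_nonneg (S t) ltac:(nlia)); lra. Qed.
Lemma b_sgm t : (1 <= t <= T)%nat -> b t * sgm t = 1.
Proof. intros; rewrite b_def. field. generalize (sgm_pos t H); lra. Qed.
Lemma b_pos t : (1 <= t <= T)%nat -> 0 < b t.
Proof. intros; rewrite b_def. apply Rinv_0_lt_compat, sgm_pos; auto. Qed.
Lemma b_rec t : (1 <= t < T)%nat -> b t + b (S t) * b t / alpha t = b (S t).
Proof. intros. rewrite !b_def. rewrite (sgm_rec t) by nlia.
  assert (0 < alpha t) by (apply Halpha; nlia). assert (0 < sgm (S t)) by (apply sgm_pos; nlia). field. repeat split; try lra. nra. Qed.
Lemma b_T : b T = alpha T.
Proof. rewrite b_def. rewrite sgm_rec, sgm_T1 by nlia. assert (0 < alpha T) by (apply Halpha; nlia). field. lra. Qed.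

Lemma hrev_pos n : 0 < hrev PS tau T alpha z n.
Proof. destruct n; simpl. apply exp_pos. unfold Rpower. apply exp_pos. Qed.
Lemma h_pos t : 0 < h t.
Proof. apply hrev_pos. Qed.
Lemma L_T : L T = z (S T).
Proof. unfold L, h, hseq. rewrite Nat.sub_diag. simpl. apply ln_exp. Qed.
Lemma h_rec t : (t < T)%nat -> h t = Rpower (exp (b (S t) * z (S t)) * qt PS tau t + Rpower (h (S t)) (b (S t)) * pt PS tau t) (/ b (S t)).
Proof. intros. unfold h, hseq. replace (T - t)%nat with (S (T - S t)) by nlia. simpl.
  replace (T - (T - S t))%nat with (S t) by nlia. replace (S t - 1)%nat with t by nlia. reflexivity. Qed.

Definition brc x t k := if Nat.leb k t then b 1 * x - b k * z k + G k else b 1 * x - b t * L t + G t.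
Definition Ef x t k := exp (- brc x t k).

Definition Dk (k j : nat) : R := if Nat.leb k j then 1 else 0.

Lemma sum_ind n k f : (1 <= k)%nat -> sumR 1 n (fun j => f j * (Dk k j - Dk k (j - 1))) = if Nat.leb k n then f k else 0.
Proof. intros Hk. induction n.
  - rewrite sumR_nil by nlia. destruct k; [nlia|reflexivity].
  - rewrite sumR_snoc by nlia. rewrite IHn. unfold Dk. replace (S n - 1)%nat with n by nlia.
    destruct (Nat.leb_spec k n); destruct (Nat.leb_spec k (S n)); try nlia; try lra.
    replace k with (S n) by nlia. lra. Qed.

Lemma sum_tail n k f : (1 <= k)%nat -> sumR 1 n (fun j => f j * (1 - Dk k j)) = sumR 1 (Nat.min n (k - 1)) f.
Proof. intros Hk. induction n.
  - rewrite !sumR_nil by nlia. auto.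
  - rewrite sumR_snoc by nlia. rewrite IHn. unfold Dk.
    destruct (Nat.leb_spec k (S n)).
    + replace (Nat.min (S n) (k-1)) with (Nat.min n (k-1)) by nlia. lra.
    + replace (Nat.min (S n) (k-1)) with (S n) by nlia. replace (Nat.min n (k-1)) with n by nlia.
      rewrite sumR_snoc by nlia. lra. Qed.

Definition Xgen (r : nat -> R) x (D : nat -> R) t :=
  Bacc r t / alpha t *
   ( b 1%nat * x
     - sumR 1 t (fun k => b k * z k * (D k - D (k - 1)%nat))
     - b t * ln (h t) * (1 - D t)
     + sumR 1 (t - 1) (fun k => b (S k) * b k / alpha k * ln (h k) * (1 - D k)) ).

Lemma Xgen_ext r x D D' t : (forall j, (j <= t)%nat -> D j = D' j) -> Xgen r x D t = Xgen r x D' t.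
Proof. intros H. unfold Xgen. rewrite H by nlia.
  rewrite (sumR_ext 1 t _ (fun k => b k * z k * (D' k - D' (k - 1)%nat))) by (intros; rewrite !H by nlia; auto).
  rewrite (sumR_ext 1 (t-1) _ (fun k => b (S k) * b k / alpha k * ln (h k) * (1 - D' k))) by (intros; rewrite !H by nlia; auto).
  auto. Qed.

Lemma Xgen_Dk r x t k : (1 <= k)%nat -> Xgen r x (Dk k) t = Bacc r t / alpha t * brc x t k.
Proof. intros Hk. unfold Xgen, brc. rewrite sum_ind by auto.
  rewrite (sum_tail (t-1) k (fun j => b (S j) * b j / alpha j * ln (h j))) by auto.
  unfold G, cc, L. unfold Dk at 1. destruct (Nat.leb_spec k t).
  - replace (Nat.min (t-1) (k-1)) with (k-1)%nat by nlia. rring.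
  - replace (Nat.min (t-1) (k-1)) with (t-1)%nat by nlia. rring. Qed.

Definition ZD (D : nat -> R) := sumR 1 T (fun t => z t * (D t - D (t - 1)%nat)) + z (S T) * (1 - D T).

Lemma ZD_ext D D' : (forall j, (j <= T)%nat -> D j = D' j) -> ZD D = ZD D'.
Proof. intros H. unfold ZD. rewrite H by nlia.
  rewrite (sumR_ext 1 T _ (fun t => z t * (D' t - D' (t - 1)%nat))) by (intros; rewrite !H by nlia; auto). auto. Qed.

Lemma ZD_Dk k : (1 <= k <= S T)%nat -> ZD (Dk k) = if Nat.leb k T then z k else z (S T).
Proof. intros Hk. unfold ZD. rewrite sum_ind by nlia. unfold Dk.
  destruct (Nat.leb_spec k T); lra. Qed.

Lemma telesc n : (S n <= T)%nat -> sumR 1 n (fun t => / alpha t * (G t - b t * L t)) + sgm (S n) * G (S n) = 0.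
Proof. induction n; intros Hn.
  - rewrite sumR_nil by nlia. unfold G. simpl. rewrite sumR_nil by nlia. rring.
  - rewrite <- (IHn ltac:(nlia)). rewrite sumR_snoc by nlia.
    assert (G (S (S n)) = G (S n) + cc (S n)).
    { unfold G. replace (S (S n) - 1)%nat with (S n) by nlia. replace (S n - 1)%nat with n by nlia.
      apply sumR_snoc; nlia. }
    rewrite H. rewrite (sgm_rec (S n)) by nlia. unfold cc.
    assert (HH := b_sgm (S (S n)) ltac:(nlia)).
    assert (0 < alpha (S n)) by (apply Halpha; nlia).
    replace (sgm (S (S n)) * (G (S n) + b (S (S n)) * b (S n) / alpha (S n) * L (S n)))
      with (sgm (S (S n)) * G (S n) + (b (S (S n)) * sgm (S (S n))) * (b (S n) / alpha (S n) * L (S n))) by rring.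
    rewrite HH. field. lra. Qed.

Lemma budget x k : (1 <= k <= S T)%nat ->
  sumR 1 T (fun t => / alpha t * brc x t k) = x - ZD (Dk k).
Proof. intros Hk. rewrite ZD_Dk by auto. unfold brc.
  assert (Hs : sumR 1 T (fun t => / alpha t * (b 1 * x)) = x).
  { rewrite (sumR_ext _ _ _ (fun t => (b 1 * x) * / alpha t)) by (intros; rring).
    rewrite sumR_scal. fold (sgm 1). replace (b 1 * x * sgm 1) with ((b 1 * sgm 1) * x) by rring.
    rewrite b_sgm by nlia. rring. }
  destruct (Nat.leb_spec k T).
  - assert (Hx : sumR 1 (k-1) (fun t => / alpha t * (b 1 * x)) + sumR k T (fun t => / alpha t * (b 1 * x)) = x).
    { replace k with (S (k-1)) at 2 by nlia. rewrite <- (sumR_split 1 (k - 1) T) by nlia. exact Hs. }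
    rewrite (sumR_split 1 (k - 1) T) by nlia. replace (S (k-1)) with k by nlia.
    rewrite (sumR_ext 1 (k-1) _ (fun t => / alpha t * (b 1 * x) + / alpha t * (G t - b t * L t))).
    2:{ intros j Hj. destruct (Nat.leb_spec k j); [nlia|rring]. }
    rewrite (sumR_ext k T _ (fun t => / alpha t * (b 1 * x) + (G k - b k * z k) * / alpha t)).
    2:{ intros j Hj. destruct (Nat.leb_spec k j); [rring|nlia]. }
    rewrite !sumR_plus, sumR_scal. fold (sgm k).
    assert (HH := telesc (k-1) ltac:(nlia)). replace (S (k-1)) with k in HH by nlia.
    assert (HB := b_sgm k ltac:(nlia)).
    assert (E2 : (G k - b k * z k) * sgm k = sgm k * G k - (b k * sgm k) * z k) by rring.
    rewrite E2, HB. lra.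
  - replace k with (S T) by nlia.
    rewrite (sumR_ext 1 T _ (fun t => / alpha t * (b 1 * x) + / alpha t * (G t - b t * L t))).
    2:{ intros j Hj. destruct (Nat.leb_spec (S T) j); [nlia|rring]. }
    rewrite sumR_plus, Hs.
    rewrite (sumR_split 1 (T-1) T) by nlia. replace (S (T-1)) with T by nlia.
    rewrite (sumR_cons T T) by nlia. rewrite (sumR_nil (S T) T) by nlia.
    assert (HH := telesc (T-1) ltac:(nlia)). replace (S (T-1)) with T in HH by nlia.
    rewrite (sgm_rec T), sgm_T1 in HH by nlia. rewrite b_T, L_T.
    assert (0 < alpha T) by (apply Halpha; nlia).
    assert (E3 : / alpha T * (G T - alpha T * z (S T)) = / alpha T * G T - z (S T)) by (field; lra).
    rewrite E3. lra.
Qed.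


Hypothesis Hmeas : forall a, Fsig PS (fun w => tau w <= a).
Hypothesis Htau : forall w, 0 < tau w.

Definition pi k := Prob PS (bucket tau T k).
Definition Ptail t := Prob PS (fun w => INR t < tau w).

Lemma Fsig_gt a : Fsig PS (fun w => a < tau w).
Proof. apply (Fsig_ext PS (fun w => ~ tau w <= a)). intros w; split; intros; lra. apply Fsig_compl, Hmeas. Qed.
Lemma Fsig_int a c : Fsig PS (fun w => a < tau w <= c).
Proof. apply Fsig_inter2. apply Fsig_gt. apply Hmeas. Qed.
Lemma Fsig_bucket k : Fsig PS (bucket tau T k).
Proof. unfold bucket. destruct (Nat.leb k T). apply (Fsig_int _ _). apply (Fsig_gt _). Qed.
Lemma pi_nonneg k : 0 <= pi k.
Proof. apply Prob_nonneg, Fsig_bucket. Qed.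
Lemma Ptail_nonneg t : 0 <= Ptail t.
Proof. apply Prob_nonneg, Fsig_gt. Qed.

Lemma pi_S t : (t < T)%nat -> pi (S t) = Prob PS (fun w => INR t < tau w <= INR (S t)).
Proof. intros Ht. unfold pi. apply Prob_ext. intros w. unfold bucket.
  replace (Nat.leb (S t) T) with true by (symmetry; apply Nat.leb_le; nlia).
  replace (S t - 1)%nat with t by nlia. tauto. Qed.
Lemma pi_T1 : pi (S T) = Ptail T.
Proof. unfold pi, Ptail. apply Prob_ext. intros w. unfold bucket.
  replace (Nat.leb (S T) T) with false by (symmetry; apply Nat.leb_gt; nlia). tauto. Qed.
Lemma Ptail_rec t : (t < T)%nat -> Ptail t = pi (S t) + Ptail (S t).
Proof. intros Ht. rewrite pi_S by auto. unfold Ptail.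
  rewrite (Prob_ext PS (fun w => INR t < tau w) (fun w => (INR t < tau w <= INR (S t)) \/ INR (S t) < tau w)).
  apply Prob_add. apply Fsig_int. apply Fsig_gt. intros w; lra.
  intros w. assert (INR t < INR (S t)) by (apply lt_INR; nlia). split.
  intros. destruct (Rle_dec (tau w) (INR (S t))); [left; lra|right; lra].
  intros [?|?]; lra. Qed.
Lemma Ptail_0 : Ptail 0 = 1.
Proof. unfold Ptail. rewrite <- (Prob_full PS). apply Prob_ext. intros w; split; auto. Qed.

Lemma tail_sum t : (t <= T)%nat -> sumR (S t) (S T) pi = Ptail t.
Proof. remember (T - t)%nat as n. revert t Heqn. induction n; intros t Hn Ht.
  - replace t with T by nlia. rewrite sumR_cons by nlia. rewrite sumR_nil by nlia. rewrite pi_T1. lra.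
  - rewrite sumR_cons by nlia. rewrite (IHn (S t)) by nlia. rewrite (Ptail_rec t) by nlia. auto. Qed.
Lemma sum_pi : sumR 1 (S T) pi = 1.
Proof. rewrite tail_sum by nlia. apply Ptail_0. Qed.

Lemma qt_eq t : (t < T)%nat -> qt PS tau t * Ptail t = pi (S t) /\ pt PS tau t * Ptail t = Ptail (S t) /\ 0 <= qt PS tau t /\ 0 <= pt PS tau t.
Proof. intros Ht. unfold pt, qt. rewrite <- pi_S by auto. fold (Ptail t).
  assert (HR := Ptail_rec t Ht). assert (H1 := pi_nonneg (S t)). assert (H2 := Ptail_nonneg (S t)).
  destruct (Req_dec (Ptail t) 0) as [E|E].
  - assert (pi (S t) = 0) by lra. rewrite E, H. unfold Rdiv. rewrite Rinv_0. repeat split; lra.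
  - assert (0 < Ptail t) by (generalize (Ptail_nonneg t); lra).
    repeat split. field; auto. unfold Rminus. rewrite Rmult_plus_distr_r. field_simplify; auto. lra.
    unfold Rdiv. apply Rmult_le_pos; auto. left; apply Rinv_0_lt_compat; auto.
    cut (pi (S t) / Ptail t <= 1). lra. apply Rmult_le_reg_r with (Ptail t); auto. field_simplify; lra.
Qed.

Lemma Rpower_pos a y : 0 < Rpower a y.
Proof. unfold Rpower. apply exp_pos. Qed.

Lemma KEY t : (t < T)%nat ->
  Rpower (h t) (b (S t)) * Ptail t = pi (S t) * exp (b (S t) * z (S t)) + Rpower (h (S t)) (b (S t)) * Ptail (S t).
Proof. intros Ht. rewrite (h_rec t Ht). destruct (qt_eq t Ht) as [E1 [E2 [Q1 Q2]]].
  assert (Hb : 0 < b (S t)) by (apply b_pos; nlia).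
  set (e := exp (b (S t) * z (S t))). set (H := Rpower (h (S t)) (b (S t))).
  assert (0 < e) by apply exp_pos. assert (0 < H) by apply Rpower_pos.
  assert (Hpq : qt PS tau t + pt PS tau t = 1) by (unfold pt; lra).
  assert (HQ : 0 < e * qt PS tau t + H * pt PS tau t).
  { assert (0 <= H * pt PS tau t) by (apply Rmult_le_pos; lra).
    destruct (Rle_lt_or_eq_dec 0 (qt PS tau t) Q1) as [Hq|Hq].
    - assert (0 < e * qt PS tau t) by (apply Rmult_lt_0_compat; lra). lra.
    - rewrite <- Hq. replace (pt PS tau t) with 1 by lra. lra. }
  rewrite Rpower_mult. replace (/ b (S t) * b (S t)) with 1 by (field; lra). rewrite Rpower_1 by auto.
  transitivity (e * (qt PS tau t * Ptail t) + H * (pt PS tau t * Ptail t)); [rring|]. rewrite E1, E2. rring. Qed.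

Lemma brc_low x t k : (k <= t)%nat -> brc x t k = brc x (S t) k.
Proof. intros. unfold brc. replace (Nat.leb k t) with true by (symmetry; apply Nat.leb_le; nlia).
  replace (Nat.leb k (S t)) with true by (symmetry; apply Nat.leb_le; nlia). auto. Qed.
Lemma brc_high x t k : (t < k)%nat -> brc x t k = b 1 * x - b t * L t + G t.
Proof. intros. unfold brc. replace (Nat.leb k t) with false by (symmetry; apply Nat.leb_gt; nlia). auto. Qed.
Lemma brc_diag x t : brc x t t = b 1 * x - b t * z t + G t.
Proof. unfold brc. rewrite Nat.leb_refl. auto. Qed.

Lemma G_S t : (1 <= t)%nat -> G (S t) = G t + cc t.
Proof. intros. unfold G. replace (S t - 1)%nat with t by nlia. replace t with (S (t - 1)) at 1 by nlia.
  rewrite sumR_snoc by nlia. replace (S (t - 1)) with t by nlia. auto. Qed.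

Lemma step x t f : (1 <= t < T)%nat -> (forall k, (t < k)%nat -> f k = f (S t)) ->
  sumR 1 (S T) (fun k => pi k * Ef x t k * f k) = sumR 1 (S T) (fun k => pi k * Ef x (S t) k * f k).
Proof. intros Ht Hf.
  rewrite !(sumR_split 1 t (S T)) by nlia.
  rewrite (sumR_ext 1 t (fun k => pi k * Ef x t k * f k) (fun k => pi k * Ef x (S t) k * f k)).
  2:{ intros k Hk. unfold Ef. rewrite brc_low by nlia. auto. }
  f_equal.
  set (K := exp (- (b 1 * x) - G (S t))).
  rewrite (sumR_ext (S t) (S T) (fun k => pi k * Ef x t k * f k) (fun k => (K * Rpower (h t) (b (S t)) * f (S t)) * pi k)).
  2:{ intros k Hk. unfold Ef. rewrite brc_high by nlia. rewrite Hf by nlia. unfold K, Rpower.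
      rewrite <- (b_rec t) by nlia. rewrite G_S by nlia. unfold cc, L.
      rewrite <- exp_plus. replace (- (b 1 * x - b t * ln (h t) + G t)) with (- (b 1 * x) - (G t + b (S t) * b t / alpha t * ln (h t)) + (b t + b (S t) * b t / alpha t) * ln (h t)) by rring. rring. }
  rewrite sumR_scal, tail_sum by nlia.
  rewrite (sumR_cons (S t) (S T)) by nlia.
  rewrite (sumR_ext (S (S t)) (S T) (fun k => pi k * Ef x (S t) k * f k) (fun k => (K * Rpower (h (S t)) (b (S t)) * f (S t)) * pi k)).
  2:{ intros k Hk. unfold Ef. rewrite brc_high by nlia. rewrite Hf by nlia. unfold K, Rpower, L.
      rewrite <- exp_plus. replace (- (b 1 * x - b (S t) * ln (h (S t)) + G (S t))) with (- (b 1 * x) - G (S t) + b (S t) * ln (h (S t))) by rring. rring. }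
  rewrite sumR_scal, tail_sum by nlia.
  unfold Ef. rewrite brc_diag.
  replace (exp (- (b 1 * x - b (S t) * z (S t) + G (S t)))) with (K * exp (b (S t) * z (S t))) by (unfold K; rewrite <- exp_plus; f_equal; rring).
  transitivity (K * f (S t) * (Rpower (h t) (b (S t)) * Ptail t)); [rring|]. rewrite (KEY t) by nlia. rring. Qed.

Lemma iterate x t f : (1 <= t <= T)%nat -> (forall k, (t < k)%nat -> f k = f (S t)) ->
  sumR 1 (S T) (fun k => pi k * Ef x t k * f k) = sumR 1 (S T) (fun k => pi k * Ef x T k * f k).
Proof. remember (T - t)%nat as n. revert t Heqn. induction n; intros t Hn Ht Hf.
  - replace t with T by nlia. auto.
  - rewrite step by (auto; nlia). apply IHn. nlia. nlia.
    intros k Hk. rewrite Hf by nlia. symmetry. apply Hf. nlia. Qed.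

Definition SE x := exp (- (b 1 * x)) * Rpower (h 0) (b 1).

Lemma SE1 x : sumR 1 (S T) (fun k => pi k * Ef x 1 k) = SE x.
Proof. rewrite sumR_cons by nlia.
  rewrite (sumR_ext 2 (S T) _ (fun k => (exp (- (b 1 * x)) * Rpower (h 1) (b 1)) * pi k)).
  2:{ intros k Hk. unfold Ef. rewrite brc_high by nlia. unfold G. rewrite (sumR_nil 1 (1-1)) by nlia.
      unfold Rpower, L. rewrite <- exp_plus. replace (- (b 1 * x - b 1 * ln (h 1) + 0)) with (- (b 1 * x) + b 1 * ln (h 1)) by rring. rring. }
  rewrite sumR_scal. rewrite (tail_sum 1) by nlia.
  unfold Ef. rewrite brc_diag. unfold G. rewrite (sumR_nil 1 (1-1)) by nlia.
  unfold SE. replace (Rpower (h 0) (b 1)) with (Rpower (h 0) (b 1) * Ptail 0) by (rewrite Ptail_0; rring).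
  rewrite (KEY 0) by nlia. replace (- (b 1 * x - b 1 * z 1 + 0)) with (- (b 1 * x) + b 1 * z 1) by rring.
  rewrite exp_plus. rring. Qed.

Lemma SEt x t : (1 <= t <= T)%nat -> sumR 1 (S T) (fun k => pi k * Ef x t k) = SE x.
Proof. intros Ht. rewrite <- (SE1 x).
  rewrite (sumR_ext 1 (S T) (fun k => pi k * Ef x t k) (fun k => pi k * Ef x t k * (fun _ => 1) k)) by (intros; rring).
  rewrite (sumR_ext 1 (S T) (fun k => pi k * Ef x 1 k) (fun k => pi k * Ef x 1 k * (fun _ => 1) k)) by (intros; rring).
  rewrite iterate by (auto; nlia). rewrite (iterate x 1) by (auto; nlia). auto. Qed.

Variable r : nat -> R.
Hypothesis Hr : forall t, (1 <= t <= T)%nat -> 0 <= r t.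

Lemma Bacc_pos t : (t <= T)%nat -> 0 < Bacc r t.
Proof. induction t; intros; simpl. lra. apply Rmult_lt_0_compat. apply IHt; nlia.
  generalize (Hr (S t) ltac:(nlia)); lra. Qed.

Lemma nth_bh k t j : (j <= t)%nat -> nth j (bucket_hist k t) false = Nat.leb k j.
Proof. intros. unfold bucket_hist. rewrite nth_indep with (d' := Nat.leb k 0).
  rewrite map_nth, seq_nth by nlia. auto. rewrite length_map, length_seq. nlia. Qed.

Lemma bh_eq k k' t : (t < k)%nat -> (t < k')%nat -> bucket_hist k t = bucket_hist k' t.
Proof. intros. unfold bucket_hist. apply map_ext_in. intros s Hs. apply in_seq in Hs.
  replace (Nat.leb k s) with false by (symmetry; apply Nat.leb_gt; nlia).
  replace (Nat.leb k' s) with false by (symmetry; apply Nat.leb_gt; nlia). auto. Qed.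

Definition gst x : nat -> list bool -> R := fun t hb => Xgen r x (fun j => if nth j hb false then 1 else 0) t.

Lemma gst_bh x t k : (1 <= k)%nat -> gst x t (bucket_hist k t) = Bacc r t / alpha t * brc x t k.
Proof. intros. unfold gst. rewrite <- Xgen_Dk by auto. apply Xgen_ext. intros j Hj.
  rewrite nth_bh by auto. unfold Dk. auto. Qed.

Definition VV x := sumR 1 T (fun t => / alpha t * (1 - SE x)).

Lemma Exp_term x t : (1 <= t <= T)%nat ->
  sumR 1 (S T) (fun k => pi k * (/ alpha t * (1 - Ef x t k))) = / alpha t * (1 - SE x).
Proof. intros Ht. rewrite (sumR_ext _ _ _ (fun k => / alpha t * pi k + (- / alpha t) * (pi k * Ef x t k))) by (intros; rring).
  rewrite sumR_plus, !sumR_scal, sum_pi, SEt by auto. rring. Qed.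

Lemma uexp_gst x t k : (1 <= t <= T)%nat -> (1 <= k)%nat ->
  uexp alpha t (gst x t (bucket_hist k t) / Bacc r t) = / alpha t * (1 - Ef x t k).
Proof. intros. rewrite gst_bh by auto. unfold uexp, Ef.
  assert (0 < Bacc r t) by (apply Bacc_pos; nlia). assert (0 < alpha t) by (apply Halpha; nlia).
  f_equal. f_equal. f_equal. field. split; lra. Qed.

Lemma value_gst x : value PS tau T r alpha (gst x) = VV x.
Proof. unfold value, VV. apply sumR_ext. intros t Ht. unfold Expect_hist. rewrite <- Exp_term by auto.
  apply sumR_ext. intros k Hk. fold (pi k). rewrite uexp_gst by nlia. auto. Qed.

Lemma uexp_bound a c y : 0 < a -> / a * (1 - exp (- a * y)) <= / a * (1 - exp (- c)) + exp (- c) * (y - c / a).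
Proof. intros Ha. set (E := exp (- c)). set (F := exp (c - a * y)).
  assert (HE : 0 < E) by apply exp_pos. assert (HF : 1 + (c - a * y) <= F) by apply exp_ineq1_le.
  assert (exp (- a * y) = E * F) by (unfold E, F; rewrite <- exp_plus; f_equal; rring).
  rewrite H. assert (0 <= / a * E * (F - (1 + (c - a * y)))).
  { apply Rmult_le_pos. apply Rmult_le_pos. left; apply Rinv_0_lt_compat; auto. lra. lra. }
  assert (/ a * (1 - E) + E * (y - c / a) - / a * (1 - E * F) = / a * E * (F - (1 + (c - a * y)))) by (field; lra).
  lra. Qed.

Lemma UB x g : (forall k, (1 <= k <= S T)%nat -> pi k = 0 \/ sumR 1 T (fun t => g t (bucket_hist k t) / Bacc r t) = x - ZD (Dk k)) ->
  value PS tau T r alpha g <= VV x.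
Proof. intros Hg. unfold value, Expect_hist. fold pi.
  set (y := fun t k => g t (bucket_hist k t) / Bacc r t).
  set (d := fun t k => y t k - brc x t k / alpha t).
  apply Rle_trans with (sumR 1 T (fun t => sumR 1 (S T) (fun k => pi k * (/ alpha t * (1 - Ef x t k)) + pi k * Ef x t k * d t k))).
  { apply sumR_le. intros t Ht. apply sumR_le. intros k Hk.
    replace (pi k * (/ alpha t * (1 - Ef x t k)) + pi k * Ef x t k * d t k) with (pi k * (/ alpha t * (1 - Ef x t k) + Ef x t k * d t k)) by rring.
    apply Rmult_le_compat_l. apply pi_nonneg. unfold uexp, Ef, d. fold (y t k). apply uexp_bound. apply Halpha; auto. }
  rewrite (sumR_ext 1 T _ (fun t => / alpha t * (1 - SE x) + sumR 1 (S T) (fun k => pi k * Ef x T k * d t k))).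
  2:{ intros t Ht. rewrite sumR_plus, Exp_term by auto. f_equal. apply iterate. auto.
      intros k Hk. unfold d, y. rewrite (bh_eq k (S t) t) by nlia. rewrite !brc_high by nlia. auto. }
  rewrite sumR_plus. fold (VV x).
  rewrite sumR_exch.
  rewrite (sumR_zero 1 (S T)). lra.
  intros k Hk.
  rewrite sumR_scal. destruct (Hg k Hk) as [E|E]. rewrite E; rring.
  unfold d. rewrite (sumR_ext _ _ _ (fun t => y t k + (-1) * (/ alpha t * brc x t k))) by (intros; rring).
  rewrite sumR_plus, sumR_scal. unfold y. rewrite E, budget by auto. rring. Qed.

Lemma in_bucket w k s : (1 <= k <= S T)%nat -> bucket tau T k w -> (s <= T)%nat ->
  (tau w <= INR s <-> (k <= s)%nat).
Proof. intros Hk Hb Hs. unfold bucket in Hb. destruct (Nat.leb_spec k T).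
  - split; intros.
    + destruct (Nat.le_gt_cases k s); auto. exfalso. assert (INR s <= INR (k - 1)) by (apply le_INR; nlia). lra.
    + assert (INR k <= INR s) by (apply le_INR; nlia). lra.
  - split; intros. exfalso. assert (INR s <= INR T) by (apply le_INR; nlia). lra. nlia. Qed.

Lemma Dind_bucket w k s : (1 <= k <= S T)%nat -> bucket tau T k w -> (s <= T)%nat -> Dind tau s w = Dk k s.
Proof. intros. unfold Dind, Dk. destruct (Rle_dec (tau w) (INR s)) as [h1|h1];
  destruct (Nat.leb_spec k s); auto; exfalso; [apply (in_bucket w k s) in h1|apply h1, (in_bucket w k s)]; auto; nlia. Qed.

Lemma hist_bucket w k t : (1 <= k <= S T)%nat -> bucket tau T k w -> (t <= T)%nat -> hist tau t w = bucket_hist k t.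
Proof. intros. unfold hist, bucket_hist. apply map_ext_in. intros s Hs. apply in_seq in Hs.
  destruct (Rle_dec (tau w) (INR s)) as [h1|h1]; destruct (Nat.leb_spec k s); auto; exfalso;
  [apply (in_bucket w k s) in h1|apply h1, (in_bucket w k s)]; auto; nlia. Qed.

Lemma exists_bucket w : exists k, (1 <= k <= S T)%nat /\ bucket tau T k w.
Proof. destruct (Rle_dec (tau w) (INR T)) as [h1|h1].
  - assert (forall n, (1 <= n)%nat -> tau w <= INR n -> exists k, (1 <= k <= n)%nat /\ INR (k - 1) < tau w <= INR k).
    { induction n; intros Hn Hle. nlia. destruct (Nat.eq_dec n 0). subst. exists 1%nat. split. nlia. replace (1-1)%nat with 0%nat by nlia. split; [apply Htau|exact Hle].
      destruct (Rle_dec (tau w) (INR n)). destruct (IHn ltac:(nlia) r0) as [k [Hk1 Hk2]]. exists k; split; auto; nlia.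
      exists (S n). split. nlia. replace (S n - 1)%nat with n by nlia. lra. }
    destruct (H T HT h1) as [k [Hk1 Hk2]]. exists k. split. nlia. unfold bucket.
    replace (Nat.leb k T) with true by (symmetry; apply Nat.leb_le; nlia). auto.
  - exists (S T). split. nlia. unfold bucket. replace (Nat.leb (S T) T) with false by (symmetry; apply Nat.leb_gt; nlia). lra. Qed.

Lemma Zclaim_bucket w k : (1 <= k <= S T)%nat -> bucket tau T k w -> Zclaim tau T z w = ZD (Dk k).
Proof. intros. unfold Zclaim. fold (ZD (fun j => Dind tau j w)). apply ZD_ext. intros. apply Dind_bucket; auto. Qed.

Lemma nth_hist t w j : (j <= t)%nat -> nth j (hist tau t w) false = (if Rle_dec (tau w) (INR j) then true else false).
Proof. intros. unfold hist. rewrite nth_indep with (d' := (fun s => if Rle_dec (tau w) (INR s) then true else false) 0%nat).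
  rewrite (map_nth (fun s => if Rle_dec (tau w) (INR s) then true else false) (seq 0 (S t)) 0%nat j), seq_nth by nlia. auto. rewrite length_map, length_seq. nlia. Qed.

Lemma Xopt_gst w0 H t w : Xopt PS tau T r alpha z w0 H t w = gst (w0 + H) t (hist tau t w).
Proof. change (Xgen r (w0 + H) (fun j => Dind tau j w) t = gst (w0 + H) t (hist tau t w)).
  unfold gst. apply Xgen_ext. intros j Hj. rewrite nth_hist by auto. unfold Dind.
  destruct (Rle_dec (tau w) (INR j)); auto. Qed.

Lemma gst_budget x w : sumR 1 T (fun t => gst x t (hist tau t w) / Bacc r t) = x - Zclaim tau T z w.
Proof. destruct (exists_bucket w) as [k [Hk Hb]]. rewrite (Zclaim_bucket w k) by auto.
  rewrite <- budget by auto. apply sumR_ext. intros t Ht. rewrite (hist_bucket w k t) by (auto; nlia).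
  rewrite gst_bh by nlia. assert (0 < Bacc r t) by (apply Bacc_pos; nlia). assert (0 < alpha t) by (apply Halpha; auto). field. split; lra. Qed.

Lemma U_is_gen x W : (forall w, W w = x - Zclaim tau T z w) -> U_is PS tau T r alpha W (VV x).
Proof. intros HW. split.
  - intros v [g [Has Hv]]. subst v. apply UB. intros k Hk.
    destruct (classic (sumR 1 T (fun t => g t (bucket_hist k t) / Bacc r t) = x - ZD (Dk k))) as [E|E]; auto. left.
    destruct Has as [N [HN1 [HN2 HN3]]].
    assert (pi k <= Prob PS N).
    { apply Prob_mono; auto. apply Fsig_bucket. intros w Hw. apply NNPP. intros HNw. apply E.
      rewrite <- (Zclaim_bucket w k Hk Hw), <- HW, <- (HN3 w HNw). apply sumR_ext. intros t Ht.
      rewrite (hist_bucket w k t) by (auto; nlia). auto. }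
    generalize (pi_nonneg k). lra.
  - intros M HM. rewrite <- value_gst. apply HM. exists (gst x). split; auto.
    exists (fun _ => False). split. apply Fsig_empty. split. apply Prob_empty.
    intros w _. rewrite gst_budget, HW. auto. Qed.

Lemma VV_closed x : VV x = sgm 1 * (1 - exp (- (b 1 * x)) * Rpower (h 0) (b 1)).
Proof. unfold VV, SE, sgm. rewrite (sumR_ext _ _ _ (fun t => (1 - exp (- (b 1 * x)) * Rpower (h 0) (b 1)) * / alpha t)) by (intros; rring).
  rewrite sumR_scal. rring. Qed.

End Main.

Lemma lub_unique (E : R -> Prop) u1 u2 : is_lub E u1 -> is_lub E u2 -> u1 = u2.
Proof. intros [H1 H2] [H3 H4]. apply Rle_antisym; auto. Qed.

Lemma hrev_zero PS tau T alpha n : hrev PS tau T alpha (fun _ => 0) n = 1.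
Proof. induction n; simpl. apply exp_0. rewrite IHn. unfold pt.
  replace (Rpower 1 (beta T alpha (T - n))) with 1 by (unfold Rpower; rewrite ln_1, Rmult_0_r, exp_0; auto).
  rewrite Rmult_0_r, exp_0. replace (1 * qt PS tau (T - n - 1) + 1 * (1 - qt PS tau (T - n - 1))) with 1 by ring.
  unfold Rpower; rewrite ln_1, Rmult_0_r, exp_0; auto. Qed.

Lemma Zclaim_zero {O} (tau : O -> R) T w : Zclaim tau T (fun _ => 0) w = 0.
Proof. unfold Zclaim. rewrite sumR_zero. ring. intros; ring. Qed.

Theorem theorem4p3 (PS : ProbSpace) (tau : Omega PS -> R) (T : nat)
    (r alpha z : nat -> R) (w0 : R) :
  (1 <= T)%nat ->
  (forall a, Fsig PS (fun w => tau w <= a)) ->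
  (forall w, 0 < tau w) ->
  (forall s, 0 <= s -> Prob PS (fun w => tau w = s) = 0) ->
  (forall t, (1 <= t <= T)%nat -> 0 <= r t) ->
  (forall t, (1 <= t <= T)%nat -> 0 < alpha t) ->
  (* (a) H(Z) = log h_0 : log h_0 is the unique c with U(w+c-Z) = U(w) *)
  (forall c : R,
     (exists u, U_is PS tau T r alpha (fun w => w0 + c - Zclaim tau T z w) u
                /\ U_is PS tau T r alpha (fun _ => w0) u)
     <-> c = ln (hseq PS tau T alpha z 0))
  /\
  (* (b) the process Xopt is adapted, lies in A(w+H(Z)-Z), and is optimal,
         its value being U(w+H(Z)-Z) = U(w) *)
  (let H := ln (hseq PS tau T alpha z 0) in
   let W := fun w => w0 + H - Zclaim tau T z w in
   exists g : nat -> list bool -> R,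
     (forall t w, (1 <= t <= T)%nat ->
        Xopt PS tau T r alpha z w0 H t w = g t (hist tau t w))
     /\ almost_surely PS
          (fun w => sumR 1 T (fun t => Xopt PS tau T r alpha z w0 H t w / Bacc r t) = W w)
     /\ U_is PS tau T r alpha W (value PS tau T r alpha g)
     /\ U_is PS tau T r alpha (fun _ => w0) (value PS tau T r alpha g)).
Proof.
  intros HT Hmeas Htau _ Hr Halpha.
  assert (U0 : U_is PS tau T r alpha (fun _ => w0) (VV PS tau T alpha (fun _ => 0) w0)).
  { apply (U_is_gen PS tau T alpha (fun _ => 0) HT Halpha Hmeas Htau r Hr). intros w. rewrite Zclaim_zero. ring. }
  assert (VV0 : VV PS tau T alpha (fun _ => 0) w0 = sgm T alpha 1 * (1 - exp (- (b T alpha 1 * w0)))).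
  { rewrite VV_closed. unfold h, hseq. rewrite hrev_zero.
    replace (Rpower 1 (b T alpha 1)) with 1 by (unfold Rpower; rewrite ln_1, Rmult_0_r, exp_0; auto). ring. }
  assert (Uc : forall c, U_is PS tau T r alpha (fun w => w0 + c - Zclaim tau T z w) (VV PS tau T alpha z (w0 + c))).
  { intros c. apply (U_is_gen PS tau T alpha z HT Halpha Hmeas Htau r Hr). intros; ring. }
  set (h0 := hseq PS tau T alpha z 0).
  assert (Hh0 : 0 < h0) by apply (h_pos PS tau T alpha z 0).
  assert (Hb1 : 0 < b T alpha 1) by (apply b_pos; auto; lia).
  assert (Hs1 : 0 < sgm T alpha 1) by (apply sgm_pos; auto; lia).
  assert (VVc : forall c, VV PS tau T alpha z (w0 + c) = sgm T alpha 1 * (1 - exp (- (b T alpha 1 * w0) + b T alpha 1 * (ln h0 - c)))).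
  { intros c. rewrite VV_closed. unfold Rpower. rewrite <- exp_plus. fold h0. unfold h. fold h0. f_equal. f_equal. f_equal. ring. }
  split.
  - intros c. split.
    + intros [u [Hu1 Hu2]].
      assert (Hu2' : VV PS tau T alpha z (w0 + c) = sgm T alpha 1 * (1 - exp (- (b T alpha 1 * w0)))).
      { rewrite <- VV0, <- (lub_unique _ _ _ Hu1 (Uc c)). apply (lub_unique _ _ _ Hu2 U0). }
      rewrite VVc in Hu2'.
      assert (E : exp (- (b T alpha 1 * w0) + b T alpha 1 * (ln h0 - c)) = exp (- (b T alpha 1 * w0))).
      { apply Rmult_eq_reg_l with (sgm T alpha 1); lra. }
      apply (f_equal ln) in E. rewrite !ln_exp in E.
      assert (b T alpha 1 * (ln h0 - c) = 0) by lra.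
      apply Rmult_integral in H. destruct H; [lra|]. fold h0. lra.
    + intros Ec. exists (VV PS tau T alpha (fun _ => 0) w0). split; auto.
      replace (VV PS tau T alpha (fun _ => 0) w0) with (VV PS tau T alpha z (w0 + c)); auto.
      rewrite VVc, VV0, Ec. fold h0. f_equal. f_equal. f_equal. ring.
  - intros H W. exists (gst PS tau T alpha z r (w0 + H)). split; [|split; [|split]].
    + intros t w _. apply Xopt_gst; auto.
    + exists (fun _ => False). split. apply Fsig_empty. split. apply Prob_empty.
      intros w _. unfold W. rewrite <- (gst_budget PS tau T alpha z HT Halpha Htau r Hr (w0 + H) w).
      apply sumR_ext. intros t _. rewrite Xopt_gst; auto.
    + rewrite (value_gst PS tau T alpha z HT Halpha Hmeas Htau r Hr). apply Uc.
    + rewrite (value_gst PS tau T alpha z HT Halpha Hmeas Htau r Hr).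
      replace (VV PS tau T alpha z (w0 + H)) with (VV PS tau T alpha (fun _ => 0) w0); auto.
      rewrite VVc, VV0. unfold H. fold h0. f_equal. f_equal. f_equal. ring.
Qed.
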